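(* Let $\mathscr{Z}=[\mathscr{Z}_1,\dots,\mathscr{Z}_k]\in\mathbb{R}^{n\times ks\times n_3}$ with $\mathscr{Z}_j\in\mathbb{R}^{n\times s\times n_3}$ and $s<n$, and suppose the tubal-global Gram–Schmidt procedure described in the context runs to completion on $\mathscr{Z}$ (no normalization breaks down). Then $\mathscr{Z}=\mathscr{Q}\star(\mathscr{R}\circledast\mathscr{I}_{ssn_3})$, where $\mathscr{Q}=[\mathscr{Q}_1,\dots,\mathscr{Q}_k]\in\mathbb{R}^{n\times ks\times n_3}$ is T-orthonormal, satisfying $\mathscr{Q}^T\diamondsuit\mathscr{Q}=\mathscr{I}_{kkn_3}$, and $\mathscr{R}\in\mathbb{R}^{k\times k\times n_3}$ is the upper triangular tensor (every frontal slice upper triangular) whose $(i,j)$ tube is $\mathbf{r}_{i,j}$ for $i\le j$ and the zero tube for $i>j$.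
   Context: All tensors are real third-order arrays. For $\mathscr{A}\in\mathbb{R}^{n_1\times n_2\times n_3}$, $\widehat{\mathscr{A}}=\mathscr{A}\times_3F_{n_3}$ denotes the tensor obtained by applying the discrete Fourier transform ($F_{n_3}$ with entries $\omega^{(i-1)(j-1)}$, $\omega=e^{-2\pi\mathrm{i}/n_3}$) to each tube $\mathscr{A}(i,j,:)$; its frontal slices $\hat A^{(k)}$ are the Fourier slices. T-product: $\mathscr{A}\star\mathscr{B}$ has Fourier slices $\hat A^{(k)}\hat B^{(k)}$. Transpose $\mathscr{A}^T$: transpose each frontal slice and reverse the order of frontal slices $2,\dots,n_3$. $\mathscr{I}_{nnn_3}$: first frontal slice $I_n$, others zero. A tube is an element of $\mathbb{R}^{1\times1\times n_3}$; $\mathbf{e}$ is the tube with entries $(1,0,\dots,0)$. For a tube $\mathbf{a}$ and a tensor $\mathscr{B}$, $\mathbf{a}\divideontimes\mathscr{B}$ is the tensor whose $(i,j)$ tube is $\mathbf{a}\star\mathscr{B}(i,j,:)$. T-Kronecker product $\mathscr{A}\circledast\mathscr{B}$: Fourier slices $\hat A^{(k)}\otimes\hat B^{(k)}$. T-trace of a square-sliced tensor: the tube whose $k$-th Fourier slice is the trace of the $k$-th Fourier slice. Tubal inner product of $\mathscr{X},\mathscr{Y}\in\mathbb{R}^{n\times s\times n_3}$: $\langle\mathscr{X},\mathscr{Y}\rangle_T=\text{T-trace}(\mathscr{X}^T\star\mathscr{Y})$. T-diamond product: for $\mathscr{A}=[\mathscr{A}_1,\dots,\mathscr{A}_p]$,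 $\mathscr{B}=[\mathscr{B}_1,\dots,\mathscr{B}_\ell]$ (blocks in $\mathbb{R}^{n\times s\times n_3}$), $\mathscr{A}^T\diamondsuit\mathscr{B}\in\mathbb{R}^{p\times\ell\times n_3}$ has $(i,j)$ tube $\langle\mathscr{A}_i,\mathscr{B}_j\rangle_T$. Normalization of a nonzero $\mathscr{W}\in\mathbb{R}^{n\times s\times n_3}$: let $\mathbf{a}$ be the tube whose $k$-th Fourier coefficient is $\|\hat W^{(k)}\|_F$ (breakdown if some of these is zero/below tolerance) and let $\mathscr{Q}$ be the tensor with Fourier slices $\hat W^{(k)}/\|\hat W^{(k)}\|_F$; output $[\mathscr{Q},\mathbf{a}]$, so that $\mathscr{W}=\mathbf{a}\divideontimes\mathscr{Q}$ and $\langle\mathscr{Q},\mathscr{Q}\rangle_T=\mathbf{e}$. Tubal-global Gram–Schmidt procedure: $[\mathscr{Q}_1,\mathbf{r}_{1,1}]=\mathrm{Normalization}(\mathscr{Z}_1)$; for $j=2,\dots,k$: set $\mathscr{W}=\mathscr{Z}_j$; for $i=1,\dots,j-1$ set $\mathbf{r}_{i,j}=\langle\mathscr{Q}_i,\mathscr{W}\rangle_T$ and $\mathscr{W}\leftarrow\mathscr{W}-\mathbf{r}_{i,j}\divideontimes\mathscr{Q}_i$; then $[\mathscr{Q}_j,\mathbf{r}_{j,j}]=\mathrm{Normalization}(\mathscr{W})$. *)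

(* Defs.v *)
From HB Require Import structures.
From mathcomp Require Import all_boot all_order all_algebra.
From mathcomp Require Import reals trigo.
From mathcomp Require Import complex mxtens.

Set Implicit Arguments.
Unset Strict Implicit.
Unset Printing Implicit Defensive.

Import Order.TTheory GRing.Theory Num.Theory.
Local Open Scope ring_scope.
Local Open Scope complex_scope.

Section Tensors.
Variable R : realType.
Local Notation C := R[i].

(* A real third-order tensor in R^{n1 x n2 x n3}, stored by frontal slices:
   (A k) i j = A(i,j,k)   (0-based indices). *)
Definition tensor (n1 n2 n3 : nat) := {ffun 'I_n3 -> 'M[R]_(n1, n2)}.

Definition omega (n3 : nat) : C :=
  (cos (2 * pi / n3%:R)) -i* (sin (2 * pi / n3%:R)).

Definition cmx m n (A : 'M[R]_(m, n)) : 'M[C]_(m, n) :=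
  map_mx (fun x => x%:C) A.

(* Fourier slices \hat A^{(k)} of  \hat A = A x_3 F_{n3},
   (F_{n3})_{k,j} = omega^{k j} (0-based). *)
Definition fslice n1 n2 n3 (A : tensor n1 n2 n3) (k : 'I_n3) : 'M[C]_(n1, n2) :=
  \sum_(j < n3) (omega n3 ^+ (k * j)) *: cmx (A j).

(* The (real) tensor whose Fourier slices are X k: inverse DFT along the
   third mode (real part taken; it is exactly real whenever X is the family
   of Fourier slices of a real tensor, which is the case for every use below). *)
Definition of_fslices n1 n2 n3 (X : 'I_n3 -> 'M[C]_(n1, n2)) : tensor n1 n2 n3 :=
  [ffun j : 'I_n3 => map_mx (@complex.Re R)
     ((n3%:R)^-1 *: \sum_(k < n3) (omega n3 ^- (k * j)) *: X k)].

Definition tprod n1 n2 n4 n3 (A : tensor n1 n2 n3) (B : tensor n2 n4 n3)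
  : tensor n1 n4 n3 :=
  of_fslices (fun k => fslice A k *m fslice B k).

(* Transpose: transpose each frontal slice, reverse the order of slices 2..n3
   (0-based: slice k of A^T is (slice ((n3 - k) mod n3) of A)^T). *)
Definition rev_slice n3 (k : 'I_n3) : 'I_n3 :=
  Ordinal (ltn_pmod (n3 - k) (leq_ltn_trans (leq0n k) (ltn_ord k))).
Definition ttrans n1 n2 n3 (A : tensor n1 n2 n3) : tensor n2 n1 n3 :=
  [ffun k => (A (rev_slice k))^T].

Definition tid n n3 : tensor n n n3 :=
  [ffun k : 'I_n3 => if (k == 0 :> nat) then 1%:M else 0].

Definition tube n3 := tensor 1 1 n3.

Definition tube_at n1 n2 n3 (B : tensor n1 n2 n3) (i : 'I_n1) (j : 'I_n2)
  : tube n3 := [ffun k => (B k i j)%:M].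

Definition of_tubes p q n3 (T : 'I_p -> 'I_q -> tube n3) : tensor p q n3 :=
  [ffun k => \matrix_(i, j) T i j k 0 0].

Definition tubescal n1 n2 n3 (a : tube n3) (B : tensor n1 n2 n3)
  : tensor n1 n2 n3 :=
  of_tubes (fun i j => tprod a (tube_at B i j)).

Definition tkron m1 n1 m2 n2 n3 (A : tensor m1 n1 n3) (B : tensor m2 n2 n3)
  : tensor (m1 * m2) (n1 * n2) n3 :=
  of_fslices (fun k => fslice A k *t fslice B k).

Definition ttrace n n3 (M : tensor n n n3) : tube n3 :=
  of_fslices (fun k => (\tr (fslice M k))%:M).

Definition tinner n s n3 (X Y : tensor n s n3) : tube n3 :=
  ttrace (tprod (ttrans X) Y).

(* Block structure A = [A_1, ..., A_p] with A_j in R^{n x s x n3}: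
   column c of block j is column j*s + c of A. *)
Definition tblock n p s n3 (A : tensor n (p * s) n3) (j : 'I_p) : tensor n s n3 :=
  [ffun m => \matrix_(a, c) A m a (mxtens_index (j, c))].

Definition tconcat n p s n3 (F : 'I_p -> tensor n s n3) : tensor n (p * s) n3 :=
  [ffun m => \matrix_(a, col)
     F (mxtens_unindex col).1 m a (mxtens_unindex col).2].

Definition tdiamondT n p l s n3 (A : tensor n (p * s) n3) (B : tensor n (l * s) n3)
  : tensor p l n3 :=
  of_tubes (fun i j => tinner (tblock A i) (tblock B j)).

Definition frobC m n (M : 'M[C]_(m, n)) : R :=
  Num.sqrt (\sum_(i < m) \sum_(j < n) (complex.Re (M i j) ^+ 2 + complex.Im (M i j) ^+ 2)).

Definition normalization n s n3 (W : tensor n s n3) : tensor n s n3 * tube n3 :=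
  (of_fslices (fun k => ((frobC (fslice W k))^-1)%:C *: fslice W k),
   of_fslices (fun k => ((frobC (fslice W k))%:C)%:M)).

Definition normalizable n s n3 (W : tensor n s n3) : Prop :=
  forall k : 'I_n3, frobC (fslice W k) != 0.

(* Inner loop of the tubal-global Gram-Schmidt procedure: given the already
   computed Q_1..Q_{j-1} and W = Z_j, for i = 1..j-1:
   r_{i,j} = <Q_i, W>_T, W <- W - r_{i,j} (divideontimes) Q_i. *)
Definition gs_orth n s n3 (Qs : seq (tensor n s n3)) (W : tensor n s n3)
  : seq (tube n3) * tensor n s n3 :=
  foldl (fun acc Qi =>
           let r := tinner Qi acc.2 in (rcons acc.1 r, acc.2 - tubescal r Qi))
        ([::], W) Qs.

Section GS.
Variables (n s k n3 : nat) (Z : tensor n (k * s) n3).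

(* Z_{j+1} (0-based j), zero for j >= k *)
Definition gs_Z (j : nat) : tensor n s n3 :=
  if insub j is Some o then tblock Z o else 0.

Fixpoint gs_Qs (j : nat) : seq (tensor n s n3) :=
  if j is j'.+1 then
    let Qs := gs_Qs j' in rcons Qs (normalization (gs_orth Qs (gs_Z j')).2).1
  else [::].

Definition gs_W (j : nat) : tensor n s n3 := (gs_orth (gs_Qs j) (gs_Z j)).2.

Definition gs_r (i j : nat) : tube n3 :=
  if (i < j)%N then nth 0 (gs_orth (gs_Qs j) (gs_Z j)).1 i
  else if i == j then (normalization (gs_W j)).2
  else 0.

Definition gs_completes : Prop := forall j, (j < k)%N -> normalizable (gs_W j).

Definition gs_Q : tensor n (k * s) n3 :=
  tconcat (fun j : 'I_k => nth 0 (gs_Qs k) j).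

Definition gs_R : tensor k k n3 := of_tubes (fun i j : 'I_k => gs_r i j).

End GS.

Definition upper_tri p n3 (T : tensor p p n3) : Prop :=
  forall (m : 'I_n3) (i j : 'I_p), (j < i)%N -> T m i j = 0.

End Tensors.

(* Main.v *)
Require Import Defs.
From HB Require Import structures.
From mathcomp Require Import all_boot all_order all_algebra.
From mathcomp Require Import reals trigo.
From mathcomp Require Import complex mxtens.
From mathcomp Require Import ring lra.

Module Helpers.
Set Implicit Arguments.
Unset Strict Implicit.
Unset Printing Implicit Defensive.
Import Order.TTheory GRing.Theory Num.Theory.
Local Open Scope ring_scope.
Local Open Scope complex_scope.

Section Omega.
Variable R : realType.
Local Notation C := R[i].
Variable n3 : nat.
Local Notation th := (2 * pi / n3%:R : R).
Local Notation w := (omega R n3).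

Lemma omega_exp m : w ^+ m = cos (m%:R * th) -i* sin (m%:R * th).
Proof.
elim: m => [|m IH]; first by rewrite expr0 !mul0r cos0 sin0 oppr0.
rewrite exprS IH /omega.
set t := (2 * pi / n3%:R).
rewrite -[m.+1]addn1 natrD mulrDl mul1r (addrC (m%:R * t)) cosD sinD.
apply/eqP; rewrite eq_complex /=; apply/andP; split; apply/eqP; ring.
Qed.

Lemma omega_n3 : (0 < n3)%N -> w ^+ n3 = 1.
Proof.
move=> n3gt0; rewrite omega_exp mulrCA mulfV ?pnatr_eq0 -?lt0n // mulr1.
have -> : (2 * pi : R) = pi *+ 2 by rewrite mulr_natl.
by rewrite cos2pi sin2pi oppr0.
Qed.

Lemma omega_neq1 m : (0 < m < n3)%N -> w ^+ m != 1.
Proof.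
case/andP=> m0 mn; rewrite omega_exp.
have n3gt0 : (0 < n3)%N by apply: leq_trans mn.
pose y : R := m%:R * pi / n3%:R.
have hx : m%:R * th = y *+ 2.
  rewrite /y -mulr_natr; ring.
have y0 : 0 < y by rewrite /y divr_gt0 ?mulr_gt0 ?ltr0n ?pi_gt0.
have ypi : y < pi.
  rewrite /y ltr_pdivrMr ?ltr0n // mulrC ltr_pM2l ?pi_gt0 //.
  by rewrite ltr_nat.
have sy : 0 < sin y by apply: sin_gt0_pi; rewrite y0 ypi.
have cx : cos (m%:R * th) < 1.
  rewrite hx cos_mulr2n cos2sin2.
  have : 0 < sin y ^+ 2 by rewrite exprn_gt0.
  move=> h; rewrite -mulr_natr; lra.
apply/negP => /eqP[] h _; move: cx; rewrite h; lra.
Qed.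

Lemma omega_conj : (w ^*) * w = 1.
Proof.
rewrite /omega /conjc; apply/eqP; rewrite eq_complex /=; apply/andP; split; apply/eqP;
  last ring.
have := cos2Dsin2 th; rewrite !expr2; lra.
Qed.

Lemma omega_unit : w != 0.
Proof. apply/negP=> /eqP h; have := omega_conj; rewrite h mulr0 => /eqP; by rewrite eq_sym oner_eq0. Qed.

Lemma omegaX_conj m : (w ^+ m)^* = (w ^+ m)^-1.
Proof.
rewrite rmorphXn /= -exprVn; congr (_ ^+ _).
apply: (mulIf omega_unit); rewrite omega_conj mulVf //; exact: omega_unit.
Qed.


Lemma omega_dvd x : (0 < n3)%N -> (n3 %| x)%N -> w ^+ x = 1.
Proof. by move=> n0 /dvdnP[q ->]; rewrite mulnC exprM omega_n3 // expr1n. Qed.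

Lemma geo_sum (z : C) : z ^+ n3 = 1 -> z != 1 -> \sum_(k < n3) z ^+ k = 0.
Proof.
move=> zn z1; have := subrX1 z n3; rewrite zn subrr => /esym /eqP.
by rewrite mulf_eq0 subr_eq0 (negPf z1) /= => /eqP.
Qed.

Lemma omega_neq_lt a b : (a < b)%N -> (b < n3)%N -> w ^+ a != w ^+ b.
Proof.
move=> ab bn; apply/negP => /eqP e.
have wu := omega_unit.
have h1 : w ^+ (b - a) = 1.
  have ha : w ^+ a != 0 by rewrite expf_neq0.
  apply: (mulfI ha); rewrite mulr1 -exprD subnKC; [exact: esym e | exact: ltnW].
have h2 : (0 < b - a < n3)%N.
  by rewrite subn_gt0 ab /=; apply: leq_ltn_trans (leq_subr _ _) bn.
by move: (omega_neq1 h2); rewrite h1 eqxx.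
Qed.
Lemma omega_ortho a b : (a < n3)%N -> (b < n3)%N ->
  \sum_(k < n3) w ^+ (k * a) * w ^- (k * b) = (a == b)%:R * n3%:R.
Proof.
move=> an bn; have n0 : (0 < n3)%N by apply: leq_ltn_trans an.
have wu := omega_unit.
have hb : w ^+ b != 0 by rewrite expf_neq0.
have ha : w ^+ a != 0 by rewrite expf_neq0.
pose z := w ^+ a * (w ^+ b)^-1.
have zE : forall k : 'I_n3, w ^+ (k * a) * w ^- (k * b) = z ^+ k.
  by move=> k; rewrite /z exprMn exprVn -!exprM (mulnC a) (mulnC b).
under eq_bigr => k _ do rewrite zE.
case: (eqVneq a b) => [eab|ab].
  rewrite /z eab mulfV // ?eqxx mul1r.
  under eq_bigr => k _ do rewrite expr1n.
  by rewrite sumr_const card_ord.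
rewrite mul0r; apply: geo_sum.
  rewrite /z exprMn exprVn -!exprM !(mulnC _ n3) !exprM omega_n3 //.
  by rewrite !expr1n invr1 mulr1.
apply/negP => /eqP h.
have e : w ^+ a = w ^+ b.
  by rewrite -[LHS]mulr1 -(mulVf hb) mulrA -/z h mul1r.
case: (ltngtP a b) => [l|l|l]; last by move: ab; rewrite l eqxx.
- by move: (omega_neq_lt l bn); rewrite e eqxx.
- by move: (omega_neq_lt l an); rewrite e eqxx.
Qed.

End Omega.

Section Fourier.
Variable R : realType.
Local Notation C := R[i].

Definition conjm m n (M : 'M[C]_(m, n)) := map_mx (@conjc R) M.
Definition symf n1 n2 n3 (X : 'I_n3 -> 'M[C]_(n1, n2)) :=
  forall k, X (rev_slice k) = conjm (X k).

Lemma rev_sliceK n3 : involutive (@rev_slice n3).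
Proof.
move=> k; apply: val_inj; rewrite [LHS]/=.
case: k => [k kn] /=.
case: (posnP k) => [k0|kp].
  by rewrite k0 subn0 modnn subn0 modnn.
have h1 : (n3 - k < n3)%N by rewrite ltn_subrL kp (leq_ltn_trans _ kn).
rewrite (modn_small h1) (subKn (ltnW kn)).
exact: modn_small.
Qed.

Lemma rev_slice_inj n3 : injective (@rev_slice n3).
Proof. exact: inv_inj (@rev_sliceK n3). Qed.



Lemma omega_rev n3 (k : 'I_n3) j :
  omega R n3 ^+ (rev_slice k * j) = omega R n3 ^- (k * j).
Proof.
have n0 : (0 < n3)%N by apply: leq_ltn_trans (ltn_ord k).
have wu := omega_unit R n3.
apply: (mulIf (expf_neq0 (k * j) wu)); rewrite mulVf ?expf_neq0 // -exprD -mulnDl.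
apply: omega_dvd => //; apply: dvdn_mulr => /=.
by rewrite /dvdn modnDml (subnK (ltnW (ltn_ord k))) modnn.
Qed.

Lemma conjM (x y : C) : conjc (x * y) = conjc x * conjc y.
Proof. exact: rmorphM. Qed.
Lemma conjB (x y : C) : conjc (x - y) = conjc x - conjc y.
Proof. exact: rmorphB. Qed.
Lemma conjV (x : C) : conjc (x^-1) = (conjc x)^-1.
Proof. exact: fmorphV. Qed.
Lemma conj_sum I (r : seq I) (P : pred I) (F : I -> C) :
  conjc (\sum_(i <- r | P i) F i) = \sum_(i <- r | P i) conjc (F i).
Proof. exact: rmorph_sum. Qed.
Lemma conjR (x : R) : conjc (x%:C) = x%:C.
Proof. exact: conjc_real. Qed.
Lemma conjN (n : nat) : conjc (n%:R : C) = n%:R.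
Proof. exact: conjc_nat. Qed.

Lemma fslice_sym n1 n2 n3 (A : tensor R n1 n2 n3) : symf (fslice A).
Proof.
move=> k; apply/matrixP => a b; rewrite /conjm /fslice !mxE !summxE conj_sum.
apply: eq_bigr => j _; rewrite !mxE omega_rev conjM conjR omegaX_conj //.
Qed.

Lemma Re_real (z : C) : conjc z = z -> ((complex.Re z)%:C) = z.
Proof.
case: z => x y [] h; apply/eqP; rewrite eq_complex /= eqxx /=.
apply/eqP; lra.
Qed.

Lemma fslice_of_fslices n1 n2 n3 (X : 'I_n3 -> 'M[C]_(n1, n2)) :
  symf X -> forall k, fslice (of_fslices X) k = X k.
Proof.
move=> hX k; have n0 : (0 < n3)%N by apply: leq_ltn_trans (ltn_ord k).
apply/matrixP => a b.
pose Y (j : 'I_n3) := ((n3%:R)^-1 *: \sum_(k' < n3) (omega R n3 ^- (k' * j)) *: X k') : 'M[C]_(n1,n2).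
have YE : forall (j : 'I_n3), Y j a b = n3%:R^-1 * \sum_(k' < n3) omega R n3 ^- (k' * j) * X k' a b.
  by move=> j; rewrite /Y mxE summxE; congr (_ * _); apply: eq_bigr => k' _; rewrite mxE.
have hA : forall j : 'I_n3, ((complex.Re (Y j a b))%:C) = Y j a b.
  move=> j; apply: Re_real; rewrite YE conjM conjV conjN conj_sum; congr (_ * _).
  rewrite (reindex_inj (@rev_slice_inj n3)) /=; apply: eq_bigr => k' _.
  by rewrite conjM conjV omegaX_conj invrK omega_rev hX /conjm mxE conjcK.
transitivity (\sum_(j < n3) omega R n3 ^+ (k * j) * Y j a b).
  rewrite /fslice summxE; apply: eq_bigr => j _; rewrite mxE; congr (_ * _).
  by rewrite mxE ffunE mxE; exact: hA.
under eq_bigr => j0 _ do rewrite YE mulrCA mulr_sumr.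
rewrite -mulr_sumr exchange_big /=.
under eq_bigr => k1 _ do under eq_bigr => j1 _ do rewrite mulrA (mulnC k) (mulnC k1).
under eq_bigr => k' _ do rewrite -mulr_suml omega_ortho //.
rewrite (bigD1 k) //= eqxx mul1r big1 ?addr0.
  by rewrite mulrA mulVf ?mul1r // pnatr_eq0 -lt0n.
move=> k' kk'; suff -> : (k == k' :> nat) = false by rewrite !mul0r.
by apply/negP => /eqP/val_inj h; rewrite h eqxx in kk'.
Qed.

Lemma of_fslices_fslice n1 n2 n3 (A : tensor R n1 n2 n3) : of_fslices (fslice A) = A.
Proof.
apply/ffunP => j; have n0 : (0 < n3)%N by apply: leq_ltn_trans (ltn_ord j).
rewrite ffunE; apply/matrixP => a b; rewrite mxE.
suff -> : ((n3%:R)^-1 *: \sum_(k < n3) omega R n3 ^- (k * j) *: fslice A k) a b = (A j a b)%:C by [].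
rewrite mxE summxE.
under eq_bigr => k _ do rewrite mxE /fslice summxE mulr_sumr.
rewrite exchange_big /=.
under eq_bigr => j' _ do under eq_bigr => k _ do rewrite !mxE mulrA (mulrC (omega R n3 ^- _)).
under eq_bigr => j' _ do rewrite -mulr_suml omega_ortho //.
rewrite (bigD1 j) //= eqxx mul1r big1 ?addr0.
  by rewrite mulrA mulVf ?mul1r // pnatr_eq0 -lt0n.
move=> j' jj'; suff -> : (j' == j :> nat) = false by rewrite !mul0r.
by apply/negP => /eqP/val_inj h; rewrite h eqxx in jj'.
Qed.

Lemma eq_of_fslices n1 n2 n3 (X Y : 'I_n3 -> 'M[C]_(n1, n2)) :
  (forall k, X k = Y k) -> of_fslices X = of_fslices Y.
Proof. by move=> h; apply/ffunP => j; rewrite !ffunE; under eq_bigr do rewrite h. Qed.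

Lemma fslice_inj n1 n2 n3 (A B : tensor R n1 n2 n3) :
  (forall k, fslice A k = fslice B k) -> A = B.
Proof. by move=> h; rewrite -(of_fslices_fslice A) -(of_fslices_fslice B); apply: eq_of_fslices. Qed.

Lemma fslice_tprod n1 n2 n4 n3 (A : tensor R n1 n2 n3) (B : tensor R n2 n4 n3) k :
  fslice (tprod A B) k = fslice A k *m fslice B k.
Proof.
rewrite /tprod fslice_of_fslices // => k'.
by rewrite !fslice_sym /conjm map_mxM.
Qed.

Lemma fslice_tkron m1 n1 m2 n2 n3 (A : tensor R m1 n1 n3) (B : tensor R m2 n2 n3) k :
  fslice (tkron A B) k = fslice A k *t fslice B k.
Proof.
rewrite /tkron fslice_of_fslices // => k'.
by rewrite !fslice_sym /conjm map_mxT.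
Qed.

Lemma fslice_ttrace n n3 (M : tensor R n n n3) k :
  fslice (ttrace M) k = (\tr (fslice M k))%:M.
Proof.
rewrite /ttrace fslice_of_fslices // => k'.
by rewrite !fslice_sym /conjm map_scalar_mx trace_map_mx.
Qed.

Lemma fslice_ttrans n1 n2 n3 (A : tensor R n1 n2 n3) k :
  fslice (ttrans A) k = (conjm (fslice A k))^T.
Proof.
apply/matrixP => a b; rewrite /fslice /conjm !mxE !summxE conj_sum.
rewrite (reindex_inj (@rev_slice_inj n3)) /=; apply: eq_bigr => j _.
rewrite !mxE ffunE rev_sliceK !mxE conjM conjR omegaX_conj.
by rewrite mulnC omega_rev mulnC.
Qed.

Lemma fslice_of_tubes p q n3 (T : 'I_p -> 'I_q -> tube R n3) k :
  fslice (of_tubes T) k = \matrix_(i, j) fslice (T i j) k 0 0.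
Proof.
apply/matrixP => a b; rewrite /fslice !mxE !summxE; apply: eq_bigr => j _.
by rewrite !mxE ffunE mxE.
Qed.

Lemma fslice_tube_at n1 n2 n3 (B : tensor R n1 n2 n3) i j k :
  fslice (tube_at B i j) k = (fslice B k i j)%:M.
Proof.
apply/matrixP => a b; rewrite !ord1 /fslice !mxE !summxE mulr1n; apply: eq_bigr => j' _.
by rewrite !mxE ffunE mxE mulr1n.
Qed.

Lemma fslice_tblock n p s n3 (A : tensor R n (p * s) n3) j k :
  fslice (tblock A j) k = \matrix_(a, c) fslice A k a (mxtens_index (j, c)).
Proof.
apply/matrixP => a b; rewrite /fslice !mxE !summxE; apply: eq_bigr => j' _.
by rewrite !mxE ffunE mxE.
Qed.

Lemma fslice_tconcat n p s n3 (F : 'I_p -> tensor R n s n3) k :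
  fslice (tconcat F) k = \matrix_(a, col)
     fslice (F (mxtens_unindex col).1) k a (mxtens_unindex col).2.
Proof.
apply/matrixP => a b; rewrite /fslice !mxE !summxE; apply: eq_bigr => j' _.
by rewrite !mxE ffunE mxE.
Qed.

Lemma fslice_tid n n3 k : fslice (tid R n n3) k = 1%:M.
Proof.
have n0 : (0 < n3)%N by apply: leq_ltn_trans (ltn_ord k).
apply/matrixP => a b; rewrite /fslice summxE (bigD1 (Ordinal n0)) //= big1 ?addr0.
  by rewrite !mxE ffunE /= muln0 expr0 mul1r mxE; case: (a == b).
move=> j jn; rewrite !mxE ffunE.
have -> : (j == 0 :> nat) = false.
  by apply/negP => /eqP h; move: jn; rewrite (_ : j = Ordinal n0) ?eqxx //; apply: val_inj.
by rewrite mxE mulr0.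
Qed.

Lemma fslice0 n1 n2 n3 k : fslice (0 : tensor R n1 n2 n3) k = 0.
Proof.
apply/matrixP => a b; rewrite /fslice summxE big1 ?mxE // => j _.
by rewrite !mxE ffunE mxE mulr0.
Qed.

Lemma fsliceB n1 n2 n3 (A B : tensor R n1 n2 n3) k :
  fslice (A - B) k = fslice A k - fslice B k.
Proof.
apply/matrixP => a b; rewrite /fslice !mxE !summxE -sumrB; apply: eq_bigr => j _.
by rewrite !mxE !ffunE !mxE raddfB mulrBr.
Qed.
End Fourier.

Section Slice.
Variable R : realType.
Local Notation C := R[i].

Definition ipc m n (M N : 'M[C]_(m, n)) : C :=
  \sum_(a < m) \sum_(c < n) conjc (M a c) * N a c.

Lemma fslice_tinner n s n3 (X Y : tensor R n s n3) k :
  fslice (tinner X Y) k = (ipc (fslice X k) (fslice Y k))%:M.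
Proof.
rewrite /tinner fslice_ttrace fslice_tprod fslice_ttrans; congr (_%:M).
rewrite /ipc /mxtrace exchange_big /=; apply: eq_bigr => c _.
by rewrite mxE; apply: eq_bigr => a _; rewrite !mxE.
Qed.

Lemma fslice_tubescal n1 n2 n3 (a : tube R n3) (B : tensor R n1 n2 n3) k :
  fslice (tubescal a B) k = fslice a k 0 0 *: fslice B k.
Proof.
rewrite /tubescal fslice_of_tubes; apply/matrixP => i j.
by rewrite !mxE fslice_tprod fslice_tube_at mul_mx_scalar !mxE mulrC.
Qed.

Lemma frobC_conj m n (M : 'M[C]_(m, n)) : frobC (conjm M) = frobC M.
Proof.
rewrite /frobC; congr (Num.sqrt _); apply: eq_bigr => a _; apply: eq_bigr => c _.
by rewrite /conjm mxE; case: (M a c) => x y /=; rewrite sqrrN.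
Qed.

Lemma fslice_norm1 n s n3 (W : tensor R n s n3) k :
  fslice (normalization W).1 k = ((frobC (fslice W k))^-1)%:C *: fslice W k.
Proof.
rewrite /normalization /= fslice_of_fslices // => k'.
rewrite fslice_sym frobC_conj /conjm map_mxZ /=; congr (_ *: _).
by rewrite oppr0.
Qed.

Lemma fslice_norm2 n s n3 (W : tensor R n s n3) k :
  fslice (normalization W).2 k = ((frobC (fslice W k))%:C)%:M.
Proof.
rewrite /normalization /= fslice_of_fslices // => k'.
rewrite fslice_sym frobC_conj /conjm map_scalar_mx /=; congr (_%:M).
by rewrite oppr0.
Qed.

Lemma ipcB m n (M N1 N2 : 'M[C]_(m, n)) : ipc M (N1 - N2) = ipc M N1 - ipc M N2.
Proof.
rewrite /ipc -sumrB; apply: eq_bigr => a _; rewrite -sumrB; apply: eq_bigr => c _.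
by rewrite !mxE mulrBr.
Qed.

Lemma ipcZr m n (M N : 'M[C]_(m, n)) x : ipc M (x *: N) = x * ipc M N.
Proof.
rewrite /ipc mulr_sumr; apply: eq_bigr => a _; rewrite mulr_sumr; apply: eq_bigr => c _.
by rewrite !mxE mulrCA.
Qed.

Lemma ipcZl m n (M N : 'M[C]_(m, n)) x : ipc (x *: M) N = conjc x * ipc M N.
Proof.
rewrite /ipc mulr_sumr; apply: eq_bigr => a _; rewrite mulr_sumr; apply: eq_bigr => c _.
by rewrite !mxE conjM mulrA.
Qed.

Lemma ipcC m n (M N : 'M[C]_(m, n)) : ipc N M = conjc (ipc M N).
Proof.
rewrite /ipc conj_sum; apply: eq_bigr => a _; rewrite conj_sum; apply: eq_bigr => c _.
by rewrite conjM conjcK mulrC.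
Qed.

Lemma conj_mul_self (z : C) : conjc z * z = (complex.Re z ^+ 2 + complex.Im z ^+ 2)%:C.
Proof.
case: z => x y; apply/eqP; rewrite eq_complex /=; apply/andP; split; apply/eqP; ring.
Qed.

Lemma ipc_self m n (M : 'M[C]_(m, n)) : ipc M M = ((frobC M) ^+ 2)%:C.
Proof.
rewrite /frobC sqr_sqrtr; last first.
  by apply: sumr_ge0 => a _; apply: sumr_ge0 => c _; rewrite addr_ge0 // sqr_ge0.
rewrite /ipc raddf_sum; apply: eq_bigr => a _; rewrite raddf_sum; apply: eq_bigr => c _.
exact: conj_mul_self.
Qed.


Lemma scalar11 (x : C) : (x%:M : 'M[C]_1) 0 0 = x.
Proof. by rewrite mxE eqxx mulr1n. Qed.

Lemma gs_orth_rcons n s n3 (Qs : seq (tensor R n s n3)) Q W :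
  gs_orth (rcons Qs Q) W =
  (rcons (gs_orth Qs W).1 (tinner Q (gs_orth Qs W).2),
   (gs_orth Qs W).2 - tubescal (tinner Q (gs_orth Qs W).2) Q).
Proof. by rewrite /gs_orth foldl_rcons. Qed.

Lemma gs_orth_size n s n3 (Qs : seq (tensor R n s n3)) W :
  size (gs_orth Qs W).1 = size Qs.
Proof.
elim/last_ind: Qs => [//|Qs Q IH].
by rewrite gs_orth_rcons /= !size_rcons IH.
Qed.

Lemma gs_orth_W n s n3 (Qs : seq (tensor R n s n3)) W k :
  fslice (gs_orth Qs W).2 k = fslice W k -
    \sum_(i < size Qs) fslice (nth 0 (gs_orth Qs W).1 i) k 0 0 *: fslice (nth 0 Qs i) k.
Proof.
elim/last_ind: Qs => [|Qs Q IH].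
  by rewrite big_ord0 subr0.
rewrite gs_orth_rcons /= fsliceB fslice_tubescal IH size_rcons big_ord_recr /=.
under [in RHS]eq_bigr => i _ do rewrite !nth_rcons gs_orth_size ltn_ord.
by rewrite !nth_rcons gs_orth_size ltnn eqxx opprD addrA.
Qed.

Lemma gs_orth_orth n s n3 (Qs : seq (tensor R n s n3)) W k :
  (forall i j, (i < size Qs)%N -> (j < size Qs)%N ->
     ipc (fslice (nth 0 Qs i) k) (fslice (nth 0 Qs j) k) = (i == j)%:R) ->
  forall i, (i < size Qs)%N -> ipc (fslice (nth 0 Qs i) k) (fslice (gs_orth Qs W).2 k) = 0.
Proof.
elim/last_ind: Qs => [//|Qs Q IH] hON i.
rewrite size_rcons ltnS => hi.
have hON' : forall i j, (i < size Qs)%N -> (j < size Qs)%N ->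
     ipc (fslice (nth 0 Qs i) k) (fslice (nth 0 Qs j) k) = (i == j)%:R.
  move=> i' j' hi' hj'; have := hON i' j'; rewrite !nth_rcons hi' hj'; apply.
    by rewrite size_rcons ltnS ltnW.
  by rewrite size_rcons ltnS ltnW.
have hQQ : ipc (fslice Q k) (fslice Q k) = 1.
  have := hON (size Qs) (size Qs); rewrite !nth_rcons ltnn eqxx size_rcons; apply => //.
rewrite gs_orth_rcons /= fsliceB fslice_tubescal fslice_tinner scalar11 ipcB ipcZr.
case: (ltnP i (size Qs)) => hlt.
  have hQi : ipc (fslice (nth 0 Qs i) k) (fslice Q k) = 0.
    have := hON i (size Qs); rewrite !nth_rcons hlt ltnn eqxx size_rcons.
    rewrite (ltn_eqF hlt) => ->; by [|rewrite ltnS ltnW|].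
  by rewrite nth_rcons hlt IH // hQi mulr0 subrr.
have -> : i = size Qs by apply/eqP; rewrite eqn_leq hi hlt.
by rewrite nth_rcons ltnn eqxx hQQ mulr1 subrr.
Qed.

End Slice.

Lemma sum_widen (V : zmodType) m K (F : nat -> V) : (m <= K)%N ->
  (forall i, (m <= i)%N -> (i < K)%N -> F i = 0) ->
  \sum_(i < m) F i = \sum_(i < K) F i.
Proof.
move=> hmK h; rewrite (big_ord_widen K F hmK) big_mkcond; apply: eq_bigr => i _.
case: ifP => // hi; rewrite h //; by rewrite leqNgt hi.
Qed.

Section GSproof.
Variable R : realType.
Local Notation C := R[i].
Variables (n s K n3 : nat) (Z : tensor R n (K * s) n3).

Lemma size_gs_Qs m : size (gs_Qs Z m) = m.
Proof. by elim: m => [//|m IH] /=; rewrite size_rcons IH. Qed.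

Lemma nth_gs_Qs m i : (i < m)%N -> nth 0 (gs_Qs Z m) i = (normalization (gs_W Z i)).1.
Proof.
elim: m => [//|m IH]; rewrite ltnS => him /=.
rewrite nth_rcons size_gs_Qs.
case: (ltnP i m) => h; first exact: IH.
have -> : i = m by apply/eqP; rewrite eqn_leq him h.
by rewrite eqxx.
Qed.

Definition Qh p i := fslice (normalization (gs_W Z i)).1 p.

Lemma Qh_E p i : Qh p i = ((frobC (fslice (gs_W Z i) p))^-1)%:C *: fslice (gs_W Z i) p.
Proof. exact: fslice_norm1. Qed.

Lemma ON_gs : gs_completes Z -> forall p j, (j <= K)%N ->
  forall i i', (i < j)%N -> (i' < j)%N -> ipc (Qh p i) (Qh p i') = (i == i')%:R.
Proof.
move=> hc p; elim=> [//|j IH] hj i i'.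
have hjK : (j < K)%N by [].
have IH' := IH (ltnW hj).
have hW := hc j hjK p.
set f := frobC (fslice (gs_W Z j) p) in hW.
have hQQ : ipc (Qh p j) (Qh p j) = 1.
  rewrite Qh_E -/f ipcZl ipcZr ipc_self -/f conjR.
  have e : (f^-1 * (f^-1 * f ^+ 2)) = 1 by field.
  transitivity ((f^-1 * (f^-1 * f ^+ 2))%:C); last by rewrite e.
  by rewrite !rmorphM.
have hQi : forall i, (i < j)%N -> ipc (Qh p i) (Qh p j) = 0.
  move=> i0 hi0; rewrite [Qh p j]Qh_E ipcZr.
  have := @gs_orth_orth R n s n3 (gs_Qs Z j) (gs_Z Z j) p.
  rewrite size_gs_Qs => H; rewrite /Qh -(nth_gs_Qs hi0) /gs_W H ?mulr0 //.
  move=> a b ha hb; rewrite !nth_gs_Qs //; exact: IH'.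
rewrite !ltnS [(i <= j)%N]leq_eqVlt [(i' <= j)%N]leq_eqVlt => /orP[/eqP->|hi] /orP[/eqP->|hi'].
- by rewrite eqxx hQQ.
- by rewrite ipcC hQi // (gtn_eqF hi') conjc0.
- by rewrite hQi // (ltn_eqF hi).
- exact: IH'.
Qed.


Lemma recon : gs_completes Z -> forall p j, (j < K)%N ->
  fslice (gs_Z Z j) p = \sum_(i < K) fslice (gs_r Z i j) p 0 0 *: Qh p i.
Proof.
move=> hc p j hj.
have hW := hc j hj p.
set f := frobC (fslice (gs_W Z j) p) in hW.
have e1 := gs_orth_W (gs_Qs Z j) (gs_Z Z j) p.
rewrite size_gs_Qs in e1.
have e2 : fslice (gs_W Z j) p = fslice (gs_r Z j j) p 0 0 *: Qh p j.
  have ff : f%:C * (f^-1)%:C = 1.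
    have : (f * f^-1)%:C = 1 by rewrite mulfV.
    by rewrite rmorphM.
  by rewrite Qh_E /gs_r ltnn eqxx fslice_norm2 scalar11 scalerA -/f ff scale1r.
have e3 : fslice (gs_Z Z j) p = \sum_(i < j.+1) fslice (gs_r Z i j) p 0 0 *: Qh p i.
  rewrite big_ord_recr /= -e2 /gs_W e1 addrC.
  suff -> : \sum_(i < j) fslice (nth 0 (gs_orth (gs_Qs Z j) (gs_Z Z j)).1 i) p 0 0 *:
             fslice (nth 0 (gs_Qs Z j) i) p =
           \sum_(i < j) fslice (gs_r Z i j) p 0 0 *: Qh p i by rewrite subrK.
  apply: eq_bigr => i _.
  rewrite /gs_r (ltn_ord i) /Qh (nth_gs_Qs (ltn_ord i)).
  reflexivity.
rewrite e3.
apply: (@sum_widen _ j.+1 K (fun i => fslice (gs_r Z i j) p 0 0 *: Qh p i) hj).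
move=> i hi1 hiK.
have hji : (j < i)%N by [].
by rewrite /gs_r ltnNge (ltnW hji) /= (gtn_eqF hji) fslice0 mxE scale0r.
Qed.

Lemma tblock_tconcat m q t (F : 'I_q -> tensor R m t n3) j : tblock (tconcat F) j = F j.
Proof.
by apply/ffunP => r; apply/matrixP => a c; rewrite !ffunE !mxE mxtens_indexK.
Qed.

Lemma gs_Q_block (i : 'I_K) : tblock (gs_Q Z) i = (normalization (gs_W Z i)).1.
Proof. by rewrite /gs_Q tblock_tconcat nth_gs_Qs. Qed.

Lemma gs_Z_ord (j : 'I_K) : gs_Z Z j = tblock Z j.
Proof.
rewrite /gs_Z; case: insubP => [o _ e|]; last by rewrite ltn_ord.
by congr tblock; apply: val_inj.
Qed.

Lemma fslice_gsR p (i j : 'I_K) : fslice (gs_R Z) p i j = fslice (gs_r Z i j) p 0 0.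
Proof. by rewrite /gs_R fslice_of_tubes mxE. Qed.

End GSproof.


End Helpers.
Import Helpers.

Unset Implicit Arguments.
Set Strict Implicit.
Set Printing Implicit Defensive.
Import GRing.Theory.
Local Open Scope ring_scope.

Theorem proposition5 (R : realType) (n s k n3 : nat)
    (Z : tensor R n (k * s) n3) :
  (s < n)%N ->
  gs_completes Z ->
  Z = tprod (gs_Q Z) (tkron (gs_R Z) (tid R s n3)) /\
  tdiamondT (gs_Q Z) (gs_Q Z) = tid R k n3 /\
  upper_tri (gs_R Z).
Proof.
move=> _ hc; split; [|split].
- apply: fslice_inj => p.
  rewrite fslice_tprod fslice_tkron fslice_tid; apply/matrixP => a col.
  case: (mxtens_indexP col) => j c.
  have -> : fslice Z p a (mxtens_index (j, c)) = fslice (tblock Z j) p a c.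
    by rewrite fslice_tblock mxE.
  rewrite -gs_Z_ord recon // summxE mxE.
  rewrite (reindex (@mxtens_index k s)) /=; last first.
    by apply: onW_bij; exists (@mxtens_unindex k s); [exact: mxtens_indexK | exact: mxtens_unindexK].
  transitivity (\sum_(x : 'I_k * 'I_s)
     fslice (gs_Q Z) p a (mxtens_index (x.1, x.2)) *
     (fslice (gs_R Z) p *t 1%:M) (mxtens_index (x.1, x.2)) (mxtens_index (j, c))); last first.
    by apply: eq_bigr => -[i c'] _.
  rewrite -(pair_bigA _ (fun i c' => fslice (gs_Q Z) p a (mxtens_index (i, c')) *
     (fslice (gs_R Z) p *t 1%:M) (mxtens_index (i, c')) (mxtens_index (j, c)))) /=.
  apply: eq_bigr => i _.
  rewrite (bigD1 c) //= big1 ?addr0; last first.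
    by move=> c' hc'; rewrite tensmxE mxE (negPf hc') mulr0 mulr0.
  rewrite tensmxE fslice_gsR !mxE eqxx ?mulr1n mulr1 mulrC; congr (_ * _).
  by rewrite /Qh -(gs_Q_block Z i) fslice_tblock mxE.
- apply: fslice_inj => p.
  rewrite fslice_of_tubes fslice_tid; apply/matrixP => i j.
  rewrite !mxE fslice_tinner !gs_Q_block scalar11.
  exact: (ON_gs hc p (leqnn k) (ltn_ord i) (ltn_ord j)).
- move=> m i j hji.
  rewrite /gs_R ffunE mxE /gs_r ltnNge (ltnW hji) /= (gtn_eqF hji).
  by rewrite ffunE mxE.
Qed.
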